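(* Let $q,m\in\mathbb{Z}$ and let $g(x,y)=a_0y^m\prod_{i=1}^n(xy^q-a_i)$ be a polynomial with $a_0\in\mathbb{C}\setminus\{0\}$ and $a_1,\dots,a_n\in\mathbb{C}$; its Newton polytope lies on the line $\ell=\{(t,qt+m):t\in\mathbb{R}\}$. Let $h(x,y)\in\mathbb{C}[x,y]$ be a polynomial such that every $(i,j)\in\mathrm{supp}(h)$ satisfies $j>qi+m$. Then there exists $\epsilon_0>0$ such that for every $0<\epsilon<\epsilon_0$ there exists $\delta>0$ such that for every $a\in\mathbb{C}$ with $0<|a|<\delta$ the following holds: if $\xi$ is a non-zero root of $g(x,a)$ of multiplicity $p$, then $g(x,a)+h(x,a)$ has exactly $p$ roots $\xi'$ (counted with multiplicity) satisfying $|\xi'-\xi|\le\epsilon|\xi|$.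
   Context: $\mathrm{supp}(h)$ is the set of exponent pairs $(i,j)$ of monomials $x^iy^j$ with non-zero coefficient in $h$; the Newton polytope is the convex hull of the support. *)

(* Defs.v *)
From HB Require Import structures.
From mathcomp Require Import all_boot all_order all_algebra.
Set Implicit Arguments. Unset Strict Implicit. Unset Printing Implicit Defensive.
Import Order.TTheory GRing.Theory Num.Theory.
Local Open Scope ring_scope.

Definition gx (C : numClosedFieldType) (q m : int) (n : nat) (a0 : C)
  (A : 'I_n -> C) (a : C) : {poly C} :=
  (a0 * a ^ m) *: \prod_(i < n) (a ^ q *: 'X - (A i)%:P).

(* A bivariate polynomial h(x,y) is represented as h : {poly {poly C}},
   h = sum_i (h`_i)(y) x^i; so (i,j) in supp h iff (h`_i)`_j != 0.
   hx h a is h(x,a) as a polynomial in x. *)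
Definition hx (C : numClosedFieldType) (h : {poly {poly C}}) (a : C) : {poly C} :=
  \poly_(i < size h) (h`_i).[a].

Definition nroots_in_disk (C : numClosedFieldType) (P : {poly C}) (c r : C)
  (p : nat) : Prop :=
  exists (k : C) (rs : seq C),
    k != 0 /\ P = k *: \prod_(z <- rs) ('X - z%:P) /\
    count (fun z => `|z - c| <= r) rs = p.

(* Main.v *)
Require Import Defs.
From HB Require Import structures.
From mathcomp Require Import all_boot all_order all_algebra.
From mathcomp Require Import ring zify.
Import Order.TTheory GRing.Theory Num.Theory.
Local Open Scope ring_scope.


Lemma slope_step {C : numClosedFieldType} (c va vb z ra rb del d : C) :
  `|va| = ra -> `|vb| = rb -> 0 < ra -> 0 <= del -> del <= rb -> rb <= d ->
  (`|z - c| <= del \/ d <= `|z - c|) ->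
  ((rb - del)/(ra + del)) ^+ ((`|z - c| <= del)%R : nat) * ((d - rb)/(d + ra)) * `|c + va - z|
   <= `|c + vb - z|.
Proof.
move=> Ha Hb ra0 del0 delrb rbd Hz.
have rb0 : 0 <= rb by rewrite -Hb normr_ge0.
have d0 : 0 < d + ra by apply: ltr_wpDl => //; apply: le_trans rbd.
have B0 : 0 <= (d - rb)/(d + ra) by rewrite divr_ge0 ?subr_ge0 // ltW.
have B1 : (d - rb)/(d + ra) <= 1.
  by rewrite ler_pdivrMr // mul1r lerD2l (le_trans _ (ltW ra0)) // oppr_le0.
have ea : `|c + va - z| <= `|z - c| + ra.
  by rewrite -Ha (_ : c + va - z = - (z - c) + va) ?(le_trans (ler_normD _ _)) ?normrN //; ring.
have eb : `|vb| - `|z - c| <= `|c + vb - z|.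
  by rewrite (_ : c + vb - z = vb - (z - c)) ?lerB_dist //; ring.
rewrite Hb in eb.
have X0 : 0 <= `|c + va - z| by [].
case: (boolP (`|z - c| <= del)) => Hn /=.
- rewrite expr1.
  have Ad0 : 0 < ra + del by apply: ltr_wpDr.
  have A0 : 0 <= (rb - del)/(ra + del) by rewrite divr_ge0 ?subr_ge0 // ltW.
  apply: le_trans (_ : (rb - del)/(ra+del) * `|c + va - z| <= _).
    by rewrite -mulrA ler_wpM2l // ler_piMl.
  apply: le_trans (_ : (rb - del)/(ra+del) * (ra + del) <= _).
    by rewrite ler_wpM2l // (le_trans ea) // addrC lerD2l.
  rewrite divfK ?gt_eqF //; apply: le_trans eb; by rewrite lerD2l lerN2.
- rewrite expr0 mul1r.
  have {Hz}Hz : d <= `|z - c| by case: Hz => // H; rewrite H in Hn.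
  have D0 : 0 < `|z - c| + ra by apply: ltr_wpDl.
  apply: le_trans (_ : (d - rb)/(d + ra) * (`|z - c| + ra) <= _).
    by rewrite ler_wpM2l.
  have eb2 : `|z - c| - rb <= `|c + vb - z|.
    by rewrite -Hb (_ : c + vb - z = - ((z - c) - vb)) ?normrN ?lerB_dist //; ring.
  apply: le_trans eb2.
  rewrite mulrAC ler_pdivrMr // -subr_ge0.
  rewrite (_ : (`|z - c| - rb) * (d + ra) - (d - rb) * (`|z - c| + ra) = (`|z - c| - d) * (ra + rb)); last by ring.
  by rewrite mulr_ge0 ?subr_ge0 // addr_ge0 // ltW.
Qed.

Lemma slope {C : numClosedFieldType} (rs : seq C) (c va vb ra rb del d : C) :
  `|va| = ra -> `|vb| = rb -> 0 < ra -> 0 <= del -> del <= rb -> rb <= d ->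
  (forall z, z \in rs -> `|z - c| <= del \/ d <= `|z - c|) ->
  ((rb - del)/(ra + del)) ^+ count (fun z => `|z - c| <= del) rs *
  ((d - rb)/(d + ra)) ^+ size rs * \prod_(z <- rs) `|c + va - z|
   <= \prod_(z <- rs) `|c + vb - z|.
Proof.
move=> Ha Hb ra0 del0 delrb rbd.
have rb0 : 0 <= rb by rewrite -Hb normr_ge0.
have d0 : 0 < d + ra by apply: ltr_wpDl => //; apply: le_trans rbd.
have B0 : 0 <= (d - rb)/(d + ra) by rewrite divr_ge0 ?subr_ge0 // ltW.
have Ad0 : 0 < ra + del by apply: ltr_wpDr.
have A0 : 0 <= (rb - del)/(ra + del) by rewrite divr_ge0 ?subr_ge0 // ltW.
elim: rs => [|z rs IH] Hrs; first by rewrite !big_nil /= !expr0 !mul1r.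
rewrite !big_cons /= exprD exprS.
set A := (rb - del)/(ra + del); set B := (d - rb)/(d + ra).
set b := nat_of_bool _.
rewrite (_ : A ^+ b * A ^+ count (fun z => `|z - c| <= del) rs *
   (B * B ^+ size rs) * (`|c + va - z| * \prod_(j <- rs) `|c + va - j|) =
   (A ^+ b * B * `|c + va - z|) * (A ^+ count (fun z => `|z - c| <= del) rs *
   B ^+ size rs * \prod_(j <- rs) `|c + va - j|)); last by ring.
apply: ler_pM.
- by apply: mulr_ge0 => //; apply: mulr_ge0 => //; apply: exprn_ge0.
- by apply: mulr_ge0; [apply: mulr_ge0; apply: exprn_ge0 | apply: prodr_ge0].
- by apply: slope_step => //; apply: Hrs; rewrite mem_head.
- by apply: IH => y Hy; apply: Hrs; rewrite in_cons Hy orbT.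
Qed.

Lemma bern {C : numClosedFieldType} (b : C) (k : nat) : 0 <= b -> b <= 1 -> 1 - k%:R * b <= (1 - b) ^+ k.
Proof.
move=> b0 b1; elim: k => [|k IH]; first by rewrite mul0r subr0 expr0.
have b10 : 0 <= 1 - b by rewrite subr_ge0.
rewrite exprS; apply: le_trans (_ : (1 - b) * (1 - k%:R * b) <= _); last first.
  by rewrite ler_wpM2l.
rewrite -subr_ge0 (_ : (1 - b) * (1 - k%:R * b) - (1 - k.+1%:R * b) = k%:R * (b * b)).
  by rewrite mulr_ge0 // mulr_ge0.
by rewrite -addn1 natrD; ring.
Qed.

Lemma powlb {C : numClosedFieldType} (x M b : C) (k K : nat) : 0 <= M -> 0 <= b -> b <= 1 ->
  (2 * K%:R) * b <= 1 -> (k <= K)%N -> M * (1 - b) <= x -> M ^+ k / 2 <= x ^+ k.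
Proof.
move=> M0 b0 b1 hK hk hx.
have b10 : 0 <= 1 - b by rewrite subr_ge0.
have x0 : 0 <= M * (1 - b) by rewrite mulr_ge0.
apply: le_trans (_ : (M * (1 - b)) ^+ k <= _); last first.
  by apply: lerXn2r; rewrite ?nnegrE // (le_trans x0).
rewrite exprMn; apply: ler_wpM2l; first exact: exprn_ge0.
apply: (@le_trans _ _ (1 - k%:R * b)); last exact: bern.
have kb : k%:R * b <= K%:R * b by rewrite ler_wpM2r // ler_nat.
rewrite -[2^-1]mul1r ler_pdivrMr ?ltr0n // -subr_ge0.
rewrite (_ : (1 - k%:R * b) * 2 - 1 = (1 - 2 * K%:R * b) + 2 * (K%:R * b - k%:R * b)); last by ring.
by rewrite addr_ge0 ?subr_ge0 // mulr_ge0 // subr_ge0.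
Qed.

Lemma ratio_a {C : numClosedFieldType} (M r1 del b : C) : 0 < r1 -> 0 <= del -> 0 <= b -> 1 <= M ->
  2 * del <= b * r1 -> M * (1 - b) <= (M * r1 - del) / (r1 + del).
Proof.
move=> r10 del0 b0 M1 hd.
have M0 : 0 <= M by apply: le_trans M1.
rewrite ler_pdivlMr ?ltr_wpDr // -subr_ge0.
rewrite (_ : M * r1 - del - M * (1 - b) * (r1 + del) =
  M * (b * r1 - 2 * del) + (M - 1) * del + M * b * del); last by ring.
by rewrite !addr_ge0 ?mulr_ge0 ?subr_ge0.
Qed.

Lemma ratio_b {C : numClosedFieldType} (M r1 del b : C) : 0 < r1 -> 0 <= del -> 0 <= b -> 1 <= M ->
  2 * del <= b * r1 -> M^-1 * (1 - b) <= (r1 - del) / (M * r1 + del).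
Proof.
move=> r10 del0 b0 M1 hd.
have M0 : 0 < M by apply: lt_le_trans M1.
have u1 : M^-1 <= 1 by rewrite invr_le1 // unitf_gt0.
have u0 : 0 <= M^-1 by rewrite invr_ge0 ltW.
have den : 0 < M * r1 + del by rewrite ltr_wpDr // mulr_gt0.
rewrite ler_pdivlMr // -subr_ge0.
rewrite (_ : M^-1 * (1 - b) * (M * r1 + del) = (1 - b) * ((M^-1 * M) * r1 + M^-1 * del)); last by ring.
rewrite mulVf ?gt_eqF // mul1r.
rewrite (_ : r1 - del - (1 - b) * (r1 + M^-1 * del) =
   (b * r1 - 2 * del) + del * (1 - M^-1) + b * M^-1 * del); last by ring.
by apply: addr_ge0; [apply: addr_ge0; [rewrite subr_ge0 | apply: mulr_ge0; rewrite ?subr_ge0] | apply: mulr_ge0; [apply: mulr_ge0|]].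
Qed.

Lemma ratio_far {C : numClosedFieldType} (d ra rb b : C) : 0 < d -> 0 <= ra -> 0 <= rb -> 0 <= b ->
  ra + rb <= b * d -> 1 * (1 - b) <= (d - rb) / (d + ra).
Proof.
move=> d0 ra0 rb0 b0 h.
rewrite mul1r ler_pdivlMr ?ltr_wpDr // -subr_ge0.
rewrite (_ : d - rb - (1 - b) * (d + ra) = (b * d - (ra + rb)) + b * ra); last by ring.
by rewrite addr_ge0 ?mulr_ge0 ?subr_ge0.
Qed.

Lemma contra_lem {C : numClosedFieldType} (Ga Gb Qa Qb S T : C) : 0 < Gb -> 0 <= S ->
  S * Qa <= Qb -> T * Gb <= Ga -> 2 * Ga <= 3 * Qa -> 3 * Qb <= 4 * Gb -> S * T <= 2.
Proof.
move=> Gb0 S0 h1 h2 h3 h4.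
rewrite -(ler_pM2r Gb0).
have e1 : 2 * (S * T * Gb) <= 2 * (S * Ga) by rewrite ler_pM2l ?ltr0n // -mulrA ler_wpM2l.
have e2 : 2 * (S * Ga) <= 3 * (S * Qa).
  by rewrite mulrCA [3 * _]mulrCA ler_wpM2l.
have e3 : 3 * (S * Qa) <= 3 * Qb by rewrite ler_pM2l ?ltr0n.
have := le_trans e1 (le_trans e2 (le_trans e3 h4)).
rewrite (_ : 4 * Gb = 2 * (2 * Gb)); last by ring.
by rewrite ler_pM2l ?ltr0n.
Qed.

Lemma powcomb {C : numClosedFieldType} (M u : C) (c p : nat) : 1 <= M -> M * u = 1 -> (p < c)%N ->
  M <= M ^+ c * u ^+ p.
Proof.
move=> M1 Mu hpc.
rewrite -(subnK (ltnW hpc)) exprD -mulrA -exprMn Mu expr1n mulr1.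
have: (0 < c - p)%N by rewrite subn_gt0.
case: (c - p)%N => // k _.
by rewrite exprS ler_peMr ?exprn_ege1 // (le_trans ler01).
Qed.

Lemma gx_horner {C : numClosedFieldType} q m n a0 (A : 'I_n -> C) a x :
  (gx q m a0 A a).[x] = a0 * a ^ m * \prod_(i < n) (a ^ q * x - A i).
Proof.
rewrite /gx hornerZ horner_prod; congr (_ * _); apply: eq_bigr => i _.
by rewrite !hornerE.
Qed.

Lemma gx_scaled {C : numClosedFieldType} q m n a0 (A : 'I_n -> C) a : a != 0 ->
  gx q m a0 A a = (a0 * a ^ m * (a ^ q) ^+ n) *:
     \prod_(z <- [seq A i / a ^ q | i <- index_enum 'I_n]) ('X - z%:P).
Proof.
move=> a0n; have aq : a ^ q != 0 by rewrite expfz_neq0.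
rewrite /gx big_map.
rewrite (eq_bigr (fun i => a ^ q *: ('X - (A i / a ^ q)%:P))); last first.
  by move=> i _; rewrite scalerBr scale_polyC mulrC divfK.
by rewrite scaler_prodl card_ord scalerA.
Qed.

Lemma mup_gx {C : numClosedFieldType} q m n a0 (A : 'I_n -> C) a xi : a != 0 -> a0 != 0 ->
  mup xi (gx q m a0 A a) = count (fun i => A i == a ^ q * xi) (index_enum 'I_n).
Proof.
move=> an a0n; have aq : a ^ q != 0 by rewrite expfz_neq0.
rewrite gx_scaled // -mul_polyC mupMr; last first.
  by rewrite rootC !mulf_neq0 ?expfz_neq0 ?expf_neq0.
rewrite mu_prod_XsubC count_map; apply: eq_count => i /=.
by rewrite -(inj_eq (mulfI aq)) mulrC divfK // eq_sym mulrC.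
Qed.

Definition Hsum {C : numClosedFieldType} (h : {poly {poly C}}) (R : C) :=
  \sum_(i < size h) \sum_(j < size h`_i) `|(h`_i)`_j| * R ^+ i.

Lemma Hsum_ge0 {C : numClosedFieldType} (h : {poly {poly C}}) (R : C) : 0 <= R -> 0 <= Hsum h R.
Proof.
move=> R0; apply: sumr_ge0 => i _; apply: sumr_ge0 => j _.
by rewrite mulr_ge0 ?exprn_ge0.
Qed.

Lemma hx_bound {C : numClosedFieldType} (q m : int) (h : {poly {poly C}}) a x R :
  (forall i j : nat, (h`_i)`_j != 0 -> q * (i%:Z) + m < j%:Z) ->
  a != 0 -> `|a| <= 1 -> `|a ^ q * x| <= R ->
  `|(hx h a).[x]| <= `|a ^ m| * `|a| * Hsum h R.
Proof.
move=> H an a1 wR.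
rewrite /hx horner_poly.
apply: le_trans (ler_norm_sum _ _ _) _.
rewrite /Hsum mulr_sumr; apply: ler_sum => i _.
rewrite horner_coef mulr_suml mulr_sumr.
apply: le_trans (ler_norm_sum _ _ _) _; apply: ler_sum => j _.
case: (eqVneq ((h`_i)`_j) 0) => [->|hij]; first by rewrite !mul0r normr0; apply: mulr_ge0; rewrite ?mulr_ge0 ?exprn_ge0 // (le_trans _ wR).
have hk := H i j hij.
have [k' ek] : exists k' : nat, j%:Z - (q * i%:Z + m) = k'.+1%:Z.
  have : 0 < j%:Z - (q * i%:Z + m) by rewrite subr_gt0.
  by case: (j%:Z - (q * i%:Z + m)) => [[|k']|k'] // _; exists k'.
have key : a ^+ j * x ^+ i = a ^ m * a ^+ k'.+1 * (a ^ q * x) ^+ i.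
  rewrite exprMn mulrA; congr (_ * _).
  rewrite !exprnP exprz_exp -!expfzDr //; congr (a ^ _).
  by rewrite -ek; ring.
rewrite -mulrA key !normrM !normrX.
rewrite (_ : `|a ^ m| * `|a| * (`|(h`_i)`_j| * R ^+ i) =
   `|(h`_i)`_j| * (`|a ^ m| * `|a| * R ^+ i)); last by ring.
apply: ler_wpM2l => //.
apply: ler_pM; rewrite ?exprn_ge0 //.
- by rewrite mulr_ge0 ?exprn_ge0.
- apply: ler_wpM2l => //.
  by rewrite -[leRHS]expr1; apply: ler_wiXn2l.
- by apply: lerXn2r; rewrite ?nnegrE // (le_trans _ wR).
Qed.

Lemma evalb {C : numClosedFieldType} (g e : C) : 3 * `|e| <= `|g| ->
  2 * `|g| <= 3 * `|g + e| /\ 3 * `|g + e| <= 4 * `|g|.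
Proof.
move=> H; split.
- apply: le_trans (_ : 3 * (`|g| - `|e|) <= _); last first.
    by rewrite ler_pM2l ?ltr0n // lerB_normD.
  rewrite -subr_ge0 (_ : 3 * (`|g| - `|e|) - 2 * `|g| = `|g| - 3 * `|e|); last by ring.
  by rewrite subr_ge0.
- apply: le_trans (_ : 3 * (`|g| + `|e|) <= _).
    by rewrite ler_pM2l ?ltr0n // ler_normD.
  rewrite -subr_ge0 (_ : 4 * `|g| - 3 * (`|g| + `|e|) = `|g| - 3 * `|e|); last by ring.
  by rewrite subr_ge0.
Qed.

Lemma prod_scale {C : numClosedFieldType} (rs : seq C) (c : C) (f : C -> C) :
  \prod_(z <- rs) (c * f z) = c ^+ size rs * \prod_(z <- rs) f z.
Proof.
elim: rs => [|z rs IH]; first by rewrite !big_nil expr0 mulr1.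
by rewrite !big_cons IH /= exprS; ring.
Qed.

Lemma transfer {C : numClosedFieldType} (S F1 F2 Q1 Q2 k l : C) : 0 < k -> 0 <= l ->
  k * Q1 = l * F1 -> k * Q2 = l * F2 -> S * F1 <= F2 -> S * Q1 <= Q2.
Proof.
move=> k0 l0 e1 e2 H.
rewrite -(ler_pM2l k0) mulrCA e1 e2 mulrCA.
by rewrite ler_wpM2l.
Qed.

Lemma final_num {C : numClosedFieldType} (X Y U V M u : C) (c p : nat) : M = 64 -> M * u = 1 -> (p < c)%N ->
  M ^+ c / 2 <= X -> 1 / 2 <= Y -> u ^+ p / 2 <= U -> 1 / 2 <= V ->
  X * Y * (U * V) <= 2 -> False.
Proof.
move=> eM Mu hpc hX hY hU hV H.
have M1 : 1 <= M by rewrite eM ler1n.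
have u0 : 0 <= u.
  have M0 : 0 < M by apply: lt_le_trans M1.
  by rewrite -(pmulr_rge0 _ M0) Mu.
have h2 : 0 <= 2^-1 :> C by rewrite invr_ge0 ler0n.
have key := @powcomb _ M u c p M1 Mu hpc.
have M0 : 0 <= M by apply: le_trans M1.
have a1 : 0 <= M ^+ c / 2 by rewrite mulr_ge0 ?exprn_ge0.
have a2 : 0 <= 1 / 2 :> C by rewrite mul1r.
have a3 : 0 <= u ^+ p / 2 by rewrite mulr_ge0 ?exprn_ge0.
have L1 : M ^+ c / 2 * (1 / 2) * (u ^+ p / 2 * (1 / 2)) <= X * Y * (U * V).
  by apply: ler_pM; rewrite ?mulr_ge0 ?exprn_ge0 //; apply: ler_pM.
have L2 : M / 16 <= M ^+ c / 2 * (1 / 2) * (u ^+ p / 2 * (1 / 2)).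
  rewrite (_ : M ^+ c / 2 * (1 / 2) * (u ^+ p / 2 * (1 / 2)) = (M ^+ c * u ^+ p) / 16).
    by rewrite ler_wpM2r // invr_ge0 ler0n.
  rewrite (_ : 16 = 2 * 2 * (2 * 2) :> C); last by rewrite -!natrM.
  by rewrite !invfM; ring.
have := le_trans L2 (le_trans L1 H).
by rewrite eM ler_pdivrMr ?ltr0n // -natrM ler_nat.
Qed.

Lemma arith1 (s n hs hh K : nat) : (s.+1 <= maxn n.+1 hs)%N -> (hs <= hh)%N -> (n + hh <= K)%N -> (s <= K)%N.
Proof. lia. Qed.

Lemma size_ie n : size (index_enum 'I_n) = n.
Proof. by rewrite [index_enum _]unlock -enumT size_enum_ord. Qed.

Arguments powlb {C x M b k K}. Arguments ratio_a {C M r1 del b}. Arguments ratio_b {C M r1 del b}.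
Arguments ratio_far {C d ra rb b}. Arguments final_num {C X Y U V M u c p}. Arguments contra_lem {C Ga Gb Qa Qb S T}.

Lemma core {C : numClosedFieldType} (q m : int) (n : nat) (a0 : C) (A : 'I_n -> C) (h : {poly {poly C}})
  (a xi eps d beta r1 del Rb : C) (K : nat) :
  (forall i j : nat, (h`_i)`_j != 0 -> q * (i%:Z) + m < j%:Z) ->
  a0 != 0 -> a != 0 -> `|a| <= 1 -> xi != 0 ->
  (forall j, A j != a ^ q * xi -> 2 * d <= `|A j - a ^ q * xi|) ->
  0 < d -> d <= 1 ->
  `|a ^ q * xi| + 1 <= Rb ->
  eps * `|a ^ q * xi| < d ->
  0 <= del -> del <= eps * `|a ^ q * xi| -> 2 * del <= beta * r1 ->
  0 < r1 -> 64 * r1 + r1 <= beta * d ->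
  0 <= beta -> beta <= 1 -> 2 * K%:R * beta <= 1 -> (n + size h <= K)%N ->
  `|a| * Hsum h Rb * 3 < `|a0| * del ^+ n ->
  nroots_in_disk (gx q m a0 A a + hx h a) xi (eps * `|xi|)
     (count (fun i => A i == a ^ q * xi) (index_enum 'I_n)).
Proof.
move=> Hh a0n an a1 xin Hsep d0 d1 HRb Heps del0 delr Hdel r10 Hr1 b0 b1 HK HnK HHs.
set al := a ^ q * xi.
have aq0 : a ^ q != 0 by rewrite expfz_neq0.
have naq : 0 < `|a ^ q| by rewrite normr_gt0.
have al0 : al != 0 by rewrite mulf_neq0.
have nal : 0 < `|al| by rewrite normr_gt0.
have nam : 0 < `|a ^ m| by rewrite normr_gt0 expfz_neq0.
have na0 : 0 < `|a0| by rewrite normr_gt0.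
set M : C := 64.
have M1 : 1 <= M by rewrite /M ler1n.
set r2 := M * r1.
have r1r2 : r1 <= r2 by rewrite /r2 ler_peMl // ltW.
have r2d : r2 <= d.
  apply: le_trans (_ : beta * d <= _); last by rewrite ler_piMl // ltW.
  by apply: le_trans Hr1; rewrite lerDl ltW.
have r1d : r1 <= d by apply: le_trans r2d.
have delr1 : del <= r1.
  apply: le_trans (_ : beta * r1 <= _); last by rewrite ler_piMl // ltW.
  by apply: le_trans Hdel; rewrite ler_peMl // ler1n.
have deld : del <= d by apply: le_trans r1d.
have Rb0 : 0 <= Rb by apply: le_trans HRb; rewrite addr_ge0.
have HsR : 0 <= Hsum h Rb by apply: Hsum_ge0.
have Gbound : forall v, r1 <= `|v| -> `|v| <= d ->
    r1 ^+ n <= \prod_(i < n) `|al + v - A i|.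
  move=> v h1 h2; rewrite -[in r1 ^+ n](card_ord n) -prodr_const; apply: ler_prod => i _.
  rewrite (ltW r10) /=; case: (eqVneq (A i) al) => [->|Hi].
    by rewrite (_ : al + v - al = v) //; ring.
  apply: le_trans r1d _.
  apply: le_trans (_ : `|A i - al| - `|v| <= _).
    rewrite -subr_ge0 (_ : `|A i - al| - `|v| - d = (`|A i - al| - 2 * d) + (d - `|v|)); last by ring.
    by rewrite addr_ge0 // subr_ge0 // Hsep.
  by rewrite (_ : al + v - A i = - ((A i - al) - v)) ?normrN ?lerB_dist //; ring.
have Ybound : forall v, `|v| <= d -> `|al + v| <= Rb.
  move=> v hv; apply: le_trans (ler_normD _ _) _; apply: le_trans HRb.
  by rewrite lerD2l (le_trans hv).
have gxe : forall x, `|(gx q m a0 A a).[x]| = `|a0| * `|a ^ m| * \prod_(i < n) `|a ^ q * x - A i|.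
  by move=> x; rewrite gx_horner !normrM normr_prod.
have hxb : forall x, `|a ^ q * x| <= Rb -> `|(hx h a).[x]| <= `|a ^ m| * `|a| * Hsum h Rb.
  move=> x Hx; exact: (@hx_bound _ q m h a x Rb Hh an a1 Hx).
have eaq : forall v, a ^ q * ((al + v) / a ^ q) = al + v.
  by move=> v; rewrite mulrC divfK.
have gxv : forall v, `|(gx q m a0 A a).[(al + v) / a ^ q]| =
    `|a0| * `|a ^ m| * \prod_(i < n) `|al + v - A i|.
  by move=> v; rewrite gxe eaq.
have evalpt : forall v, r1 <= `|v| -> `|v| <= d ->
    3 * `|(hx h a).[(al + v) / a ^ q]| < `|(gx q m a0 A a).[(al + v) / a ^ q]|.
  move=> v h1 h2; rewrite gxv.
  have hb := hxb ((al + v) / a ^ q).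
  rewrite eaq in hb; have {}hb := hb (Ybound _ h2).
  apply: le_lt_trans (_ : 3 * (`|a ^ m| * `|a| * Hsum h Rb) < _).
    by rewrite ler_pM2l ?ltr0n.
  rewrite (_ : 3 * (`|a ^ m| * `|a| * Hsum h Rb) = `|a ^ m| * (`|a| * Hsum h Rb * 3)); last by ring.
  rewrite (_ : `|a0| * `|a ^ m| * \prod_(i < n) `|al + v - A i| =
     `|a ^ m| * (`|a0| * \prod_(i < n) `|al + v - A i|)); last by ring.
  rewrite ltr_pM2l //; apply: lt_le_trans HHs _.
  rewrite ler_pM2l //; apply: le_trans (Gbound _ h1 h2).
  by apply: lerXn2r; rewrite ?nnegrE // ltW.
pose v1 := (r1 / `|al|) * al; pose v2 := (r2 / `|al|) * al.
have r20 : 0 < r2 by rewrite mulr_gt0 // (lt_le_trans ltr01).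
have nv1 : `|v1| = r1 by rewrite normrM ger0_norm ?divr_ge0 ?ltW // divfK ?gt_eqF.
have nv2 : `|v2| = r2 by rewrite normrM ger0_norm ?divr_ge0 ?ltW // divfK ?gt_eqF.
pose x1 := (al + v1) / a ^ q; pose x2 := (al + v2) / a ^ q.
have ev1 : 3 * `|(hx h a).[x1]| < `|(gx q m a0 A a).[x1]|.
  by apply: evalpt; rewrite nv1.
have ev2 : 3 * `|(hx h a).[x2]| < `|(gx q m a0 A a).[x2]|.
  by apply: evalpt; rewrite nv2.
have [E1a E1b] := evalb _ _ (ltW ev1).
have [E2a E2b] := evalb _ _ (ltW ev2).
set P := gx q m a0 A a + hx h a.
have Gv1 : 0 < `|(gx q m a0 A a).[x1]| by apply: le_lt_trans ev1; rewrite mulr_ge0.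
have Gv2 : 0 < `|(gx q m a0 A a).[x2]| by apply: le_lt_trans ev2; rewrite mulr_ge0.
have Pn0 : P != 0.
  apply/eqP => P0; move: E1a; rewrite -hornerD -/P P0 horner0 normr0 mulr0.
  by rewrite pmulr_rle0 ?ltr0n // => /(lt_le_trans Gv1); rewrite ltxx.
have [rs Prs] := closed_field_poly_normal P.
exists (lead_coef P), rs; split; first by rewrite lead_coef_eq0.
split; first exact: Prs.
have rootP : forall z, z \in rs -> P.[z] = 0.
  move=> z zr; apply/eqP; rewrite -/(root P z) Prs rootZ ?lead_coef_eq0 //.
  by rewrite root_prod_XsubC.
have dich : forall z, z \in rs ->
    `|a ^ q * z - al| <= del \/ d <= `|a ^ q * z - al|.
  move=> z zr; have Pz := rootP z zr.
  set w := a ^ q * z.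
  have : (`|w| <= Rb) || (Rb <= `|w|) by rewrite real_leVge ?normr_real ?ger0_real.
  case/orP => wR; last first.
    right; apply: le_trans d1 _.
    apply: le_trans (_ : `|w| - `|al| <= _); last exact: lerB_dist.
    rewrite -subr_ge0 (_ : `|w| - `|al| - 1 = (`|w| - Rb) + (Rb - (`|al| + 1))); last by ring.
    by rewrite addr_ge0 // subr_ge0.
  have eg : `|(gx q m a0 A a).[z]| = `|(hx h a).[z]|.
    move: Pz; rewrite /P hornerD => /eqP; rewrite addr_eq0 => /eqP ->.
    by rewrite normrN.
  have prodlt : \prod_(i < n) `|w - A i| < del ^+ n.
    have := hxb z wR; rewrite -eg gxe -/w => H1.
    have H2 : `|a0| * (\prod_(i < n) `|w - A i| * 3) < `|a0| * del ^+ n.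
      apply: le_lt_trans HHs.
      rewrite -(ler_pM2l nam).
      rewrite (_ : `|a ^ m| * (`|a0| * (\prod_(i < n) `|w - A i| * 3)) =
          (`|a0| * `|a ^ m| * \prod_(i < n) `|w - A i|) * 3); last by ring.
      rewrite (_ : `|a ^ m| * (`|a| * Hsum h Rb * 3) = (`|a ^ m| * `|a| * Hsum h Rb) * 3); last by ring.
      by rewrite ler_pM2r ?ltr0n.
    rewrite ltr_pM2l // in H2; apply: le_lt_trans H2.
    by rewrite ler_peMr ?ler1n // prodr_ge0.
  case: (boolP [exists i, `|w - A i| < del]).
  - case/existsP => i Hi; case: (eqVneq (A i) al) => [Ei|Ei].
      by left; rewrite -Ei; apply: ltW.
    right; apply: le_trans (_ : `|A i - al| - `|w - A i| <= _).
      rewrite -subr_ge0 (_ : `|A i - al| - `|w - A i| - d =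
         (`|A i - al| - 2 * d) + (d - del) + (del - `|w - A i|)); last by ring.
      by apply: addr_ge0; [apply: addr_ge0; rewrite subr_ge0 ?Hsep | rewrite subr_ge0 ltW].
    rewrite (_ : w - al = (A i - al) - (A i - w)); last by ring.
    by rewrite -[`|w - A i|]distrC; apply: lerB_dist.
  - move/existsPn => Hn; exfalso.
    have H : del ^+ n <= \prod_(i < n) `|w - A i|.
      rewrite -[in del ^+ n](card_ord n) -prodr_const; apply: ler_prod => i _.
      by rewrite del0 /= real_leNgt ?ger0_real ?normr_real ?Hn.
    by have := lt_le_trans prodlt H; rewrite ltxx.
have cnt1 : count (fun z => `|z - xi| <= eps * `|xi|) rs =
    count (fun w => `|w - al| <= del) (map (fun z => a ^ q * z) rs).
  rewrite count_map; apply: eq_in_count => z zr /=.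
  have -> : (`|z - xi| <= eps * `|xi|) = (`|a ^ q * z - al| <= eps * `|al|).
    by rewrite /al -mulrBr !normrM mulrCA ler_pM2l.
  case: (dich z zr) => H; first by rewrite H (le_trans H delr).
  have f1 := lt_le_trans Heps H; have f2 := le_lt_trans delr f1.
  by rewrite (lt_geF f1) (lt_geF f2).
rewrite cnt1.
set ws := map (fun z => a ^ q * z) rs.
set Al := [seq A i | i <- index_enum 'I_n].
have -> : count (fun i => A i == al) (index_enum 'I_n) = count (fun z => `|z - al| <= 0) Al.
  by rewrite count_map; apply: eq_count => i /=; rewrite normr_le0 subr_eq0.
set c := count _ ws; set p := count _ Al.
have lc0 : 0 < `|lead_coef P| by rewrite normr_gt0 lead_coef_eq0.
have sAl : size Al = n by rewrite size_map size_ie.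
have sws : (size ws <= K)%N.
  have h1 : size P = (size rs).+1.
    by rewrite {1}Prs size_scale ?lead_coef_eq0 // size_prod_XsubC.
  have h2 : size (gx q m a0 A a) = n.+1.
    rewrite gx_scaled // size_scale; first by rewrite size_prod_XsubC size_map size_ie.
    by rewrite !mulf_neq0 ?expfz_neq0 ?expf_neq0.
  have h3 := size_polyD (gx q m a0 A a) (hx h a).
  have h4 : (size (hx h a) <= size h)%N by apply: size_poly.
  rewrite size_map; move: h3; rewrite -/P h1 h2 => h3.
  exact: arith1 h3 h4 HnK.
have cK : (c <= K)%N by apply: leq_trans (count_size _ _) sws.
have nK : (n <= K)%N by apply: leq_trans HnK; apply: leq_addr.
have pK : (p <= K)%N by apply: leq_trans (count_size _ _) _; rewrite sAl.
have Fr : forall v, `|a ^ q| ^+ size rs * `|P.[(al + v) / a ^ q]| =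
    `|lead_coef P| * \prod_(w <- ws) `|al + v - w|.
  move=> v; rewrite {1}Prs hornerZ horner_prod normrM normr_prod mulrCA -prod_scale big_map.
  congr (_ * _); apply: eq_bigr => z _.
  by rewrite hornerXsubC -normrM mulrBr eaq.
have Gr : forall v, 1 * `|(gx q m a0 A a).[(al + v) / a ^ q]| =
    (`|a0| * `|a ^ m|) * \prod_(z <- Al) `|al + v - z|.
  by move=> v; rewrite mul1r gxv big_map.
have dichw : forall w, w \in ws -> `|w - al| <= del \/ d <= `|w - al|.
  by move=> w /mapP [z zr ->]; apply: dich.
have dichA : forall z, z \in Al -> `|z - al| <= 0 \/ d <= `|z - al|.
  move=> z /mapP [i _ ->]; case: (eqVneq (A i) al) => [->|Hi].
    by left; rewrite subrr normr0.
  by right; apply: le_trans (Hsep _ Hi); rewrite ler_peMl ?ler1n // ltW.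
have sz : size ws = size rs by rewrite size_map.
have kq : 0 < `|a ^ q| ^+ size rs by rewrite exprn_gt0.
have l0 : 0 <= `|a0| * `|a ^ m| by rewrite mulr_ge0.
have SP1 := @slope _ ws al v1 v2 r1 r2 del d nv1 nv2 r10 del0 (le_trans delr1 r1r2) r2d dichw.
have SP2 := @slope _ ws al v2 v1 r2 r1 del d nv2 nv1 r20 del0 delr1 r1d dichw.
have SG1 := @slope _ Al al v1 v2 r1 r2 0 d nv1 nv2 r10 (lexx 0) (ltW r20) r2d dichA.
have SG2 := @slope _ Al al v2 v1 r2 r1 0 d nv2 nv1 r20 (lexx 0) (ltW r10) r1d dichA.
rewrite sAl in SG1 SG2.
have QP1 := transfer _ _ _ _ _ _ _ kq (ltW lc0) (Fr v1) (Fr v2) SP1.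
have QP2 := transfer _ _ _ _ _ _ _ kq (ltW lc0) (Fr v2) (Fr v1) SP2.
have QG1 := transfer _ _ _ _ _ _ _ ltr01 l0 (Gr v1) (Gr v2) SG1.
have QG2 := transfer _ _ _ _ _ _ _ ltr01 l0 (Gr v2) (Gr v1) SG2.
rewrite -/x1 -/x2 in QP1 QP2 QG1 QG2.
rewrite -hornerD -/P in E1a E1b.
rewrite -hornerD -/P in E2a E2b.
have M0 : 0 < M by apply: lt_le_trans M1.
pose u := M^-1.
have Mu : M * u = 1 by rewrite /u mulfV ?gt_eqF.
have u0 : 0 <= u by rewrite /u invr_ge0 ltW.
have Hr1' : r1 + r2 <= beta * d by rewrite addrC.
have Hr1'' : r2 + r1 <= beta * d by [].
have Hd0 : 2 * 0 <= beta * r1 by rewrite mulr0 mulr_ge0 // ltW.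
have XP1 := powlb (ltW M0) b0 b1 HK cK (ratio_a r10 del0 b0 M1 Hdel).
have XP2 := powlb u0 b0 b1 HK cK (ratio_b r10 del0 b0 M1 Hdel).
have XG1 := powlb (ltW M0) b0 b1 HK pK (ratio_a r10 (lexx 0) b0 M1 Hd0).
have XG2 := powlb u0 b0 b1 HK pK (ratio_b r10 (lexx 0) b0 M1 Hd0).
have YP1 := powlb ler01 b0 b1 HK sws (ratio_far d0 (ltW r10) (ltW r20) b0 Hr1').
have YP2 := powlb ler01 b0 b1 HK sws (ratio_far d0 (ltW r20) (ltW r10) b0 Hr1'').
have YG1 := powlb ler01 b0 b1 HK nK (ratio_far d0 (ltW r10) (ltW r20) b0 Hr1').
have YG2 := powlb ler01 b0 b1 HK nK (ratio_far d0 (ltW r20) (ltW r10) b0 Hr1'').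
rewrite expr1n in YP1; rewrite expr1n in YP2; rewrite expr1n in YG1; rewrite expr1n in YG2.
have ge0 : forall (x y : C) (k : nat), y ^+ k / 2 <= x ^+ k -> 0 <= y -> 0 <= x ^+ k.
  by move=> x y k H y0; apply: le_trans H; rewrite mulr_ge0 ?exprn_ge0 ?invr_ge0 ?ler0n.
case: (ltngtP p c) => Hpc //.
- exfalso; apply: (final_num (erefl M) Mu Hpc XP1 YP1 XG2 YG2).
  apply: (contra_lem Gv2 _ QP1 QG2 E1a E2b).
  by apply: mulr_ge0; [apply: (ge0 _ _ _ XP1 (ltW M0)) | apply: (ge0 _ 1 _ _ ler01); rewrite expr1n].
- exfalso; apply: (final_num (erefl M) Mu Hpc XG1 YG1 XP2 YP2).
  rewrite mulrC; apply: (contra_lem Gv1 _ QP2 QG1 E2a E1b).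
  by apply: mulr_ge0; [apply: (ge0 _ _ _ XP2 u0) | apply: (ge0 _ 1 _ _ ler01); rewrite expr1n].
Qed.
Definition fr {C : numClosedFieldType} (x : C) := x / (1 + x).

Lemma fr_gt0 {C : numClosedFieldType} (x : C) : 0 < x -> 0 < fr x.
Proof. by move=> x0; rewrite /fr divr_gt0 ?addr_gt0. Qed.

Lemma fr_le1 {C : numClosedFieldType} (x : C) : 0 <= x -> fr x <= 1.
Proof.
move=> x0; have h0 : 0 < 1 + x := ltr_pwDl ltr01 x0.
by rewrite /fr ler_pdivrMr ?mul1r ?lerDr.
Qed.

Lemma fr_le {C : numClosedFieldType} (x : C) : 0 <= x -> fr x <= x.
Proof.
move=> x0; have h0 : 0 < 1 + x := ltr_pwDl ltr01 x0.
rewrite /fr ler_pdivrMr // mulrDr mulr1.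
by rewrite lerDl mulr_ge0.
Qed.

Lemma prod_le_one {C : numClosedFieldType} (I : finType) (P : pred I) (F : I -> C) :
  (forall i, P i -> 0 <= F i <= 1) -> forall i, P i -> \prod_(j | P j) F j <= F i.
Proof.
move=> H i Pi; rewrite (bigD1 i) //=.
have /andP [F0 F1] := H i Pi.
rewrite ler_piMr // prodr_ile1 // => j /andP [Pj _]; exact: H.
Qed.

Definition hm {C : numClosedFieldType} (x y : C) := x * y / (x + y).

Lemma hm_gt0 {C : numClosedFieldType} (x y : C) : 0 < x -> 0 < y -> 0 < hm x y.
Proof. by move=> x0 y0; rewrite /hm divr_gt0 ?mulr_gt0 ?addr_gt0. Qed.

Lemma hm_lel {C : numClosedFieldType} (x y : C) : 0 < x -> 0 < y -> hm x y <= x.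
Proof.
move=> x0 y0; rewrite /hm ler_pdivrMr ?addr_gt0 // mulrDr.
by rewrite lerDr mulr_ge0 // ltW.
Qed.

Lemma hm_ler {C : numClosedFieldType} (x y : C) : 0 < x -> 0 < y -> hm x y <= y.
Proof.
move=> x0 y0; rewrite /hm ler_pdivrMr ?addr_gt0 // mulrDr [x * y]mulrC.
by rewrite lerDl mulr_ge0 // ltW.
Qed.

Theorem lemma5p2 (C : numClosedFieldType) (q m : int) (n : nat) (a0 : C)
    (A : 'I_n -> C) (h : {poly {poly C}}) :
  a0 != 0 ->
  (forall i j : nat, (h`_i)`_j != 0 -> q * (i%:Z) + m < j%:Z) ->
  exists eps0 : C, 0 < eps0 /\
    forall eps : C, 0 < eps -> eps < eps0 ->
      exists delta : C, 0 < delta /\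
        forall a : C, 0 < `|a| -> `|a| < delta ->
          forall (xi : C) (p : nat),
            xi != 0 -> root (gx q m a0 A a) xi -> mup xi (gx q m a0 A a) = p ->
            nroots_in_disk (gx q m a0 A a + hx h a) xi (eps * `|xi|) p.
Proof.
move=> a0n Hh.
pose Amax := 1 + \sum_(i < n) `|A i|.
pose sep := \prod_(ij : 'I_n * 'I_n | A ij.1 != A ij.2) fr `|A ij.1 - A ij.2|.
pose amin := \prod_(i : 'I_n | A i != 0) fr `|A i|.
have Am : forall i, `|A i| + 1 <= Amax.
  move=> i; rewrite /Amax addrC lerD2l (bigD1 i) //= lerDl.
  by apply: sumr_ge0.
have Amax0 : 0 < Amax by rewrite /Amax ltr_pwDl // sumr_ge0.
have sep0 : 0 < sep.
  apply: prodr_gt0 => ij Hij; apply: fr_gt0; by rewrite normr_gt0 subr_eq0.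
have sep1 : sep <= 1.
  apply: prodr_ile1 => ij Hij; rewrite fr_le1 // andbT.
  by apply: ltW; apply: fr_gt0; rewrite normr_gt0 subr_eq0.
have sepij : forall i j, A i != A j -> sep <= `|A i - A j|.
  move=> i j Hij; apply: (@le_trans _ _ (fr `|A i - A j|)); last exact: fr_le.
  apply: (prod_le_one _ (fun ij : 'I_n * 'I_n => A ij.1 != A ij.2)
          (fun ij => fr `|A ij.1 - A ij.2|) _ (i, j)) => //.
  move=> ij Hij2; rewrite fr_le1 // andbT.
  by apply: ltW; apply: fr_gt0; rewrite normr_gt0 subr_eq0.
have amin0 : 0 < amin.
  by apply: prodr_gt0 => i Hi; apply: fr_gt0; rewrite normr_gt0.
have amini : forall i, A i != 0 -> amin <= `|A i|.
  move=> i Hi; apply: (@le_trans _ _ (fr `|A i|)); last exact: fr_le.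
  apply: (prod_le_one _ (fun i : 'I_n => A i != 0) (fun i => fr `|A i|) _ i) => //.
  move=> j Hj2; rewrite fr_le1 // andbT.
  by apply: ltW; apply: fr_gt0; rewrite normr_gt0.
pose d := sep / 2.
have d0 : 0 < d by rewrite /d divr_gt0.
have d1 : d <= 1.
  rewrite /d ler_pdivrMr ?ltr0n // mul1r; apply: le_trans sep1 _; by rewrite ler1n.
have dsep : 2 * d = sep by rewrite /d mulrC divfK ?pnatr_eq0.
exists (d / Amax); split; first by rewrite divr_gt0.
move=> eps eps0 epsl.
pose K := (n + size h).+1.
pose beta := (2 * K%:R : C)^-1.
have K0 : 0 < 2 * K%:R :> C by rewrite mulr_gt0 ?ltr0n.
have b0 : 0 < beta by rewrite /beta invr_gt0.
have b1 : beta <= 1.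
  rewrite /beta invf_le1 // -natrM ler1n; by rewrite muln_gt0.
have HK : 2 * K%:R * beta <= 1 by rewrite /beta mulfV ?gt_eqF.
pose r1 := beta * d / 65.
have r10 : 0 < r1 by apply: divr_gt0; [apply: mulr_gt0 | rewrite ltr0n].
have Hr1 : 64 * r1 + r1 <= beta * d.
  rewrite (_ : 64 * r1 + r1 = 65 * r1); last by ring.
  by rewrite /r1 mulrCA ?divff ?pnatr_eq0 ?mulr1.
pose del := hm (eps * amin) (beta * r1 / 2).
have ea0 : 0 < eps * amin by apply: mulr_gt0.
have br0 : 0 < beta * r1 / 2 by apply: divr_gt0; [apply: mulr_gt0 | rewrite ltr0n].
have del0 : 0 < del by apply: hm_gt0.
have Hdel : 2 * del <= beta * r1.
  rewrite mulrC -ler_pdivlMr ?ltr0n //; exact: hm_ler.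
pose Rb := Amax + 1.
pose Hs := Hsum h Rb.
have Hs0 : 0 <= Hs by apply: Hsum_ge0; apply: addr_ge0; [apply: ltW|].
have Hs10 : 0 < 3 * (Hs + 1) by apply: mulr_gt0; [rewrite ltr0n | apply: ltr_wpDl].
have dn0 : 0 < `|a0| * del ^+ n by apply: mulr_gt0; [rewrite normr_gt0 | apply: exprn_gt0].
exists (hm 1 (`|a0| * del ^+ n / (3 * (Hs + 1)))); split.
  exact: hm_gt0 ltr01 (divr_gt0 dn0 Hs10).
move=> a a0' adel xi p xin rxi mxi.
have an : a != 0 by rewrite -normr_gt0.
have a1 : `|a| <= 1 by apply: ltW; apply: lt_le_trans adel _; exact: hm_lel ltr01 (divr_gt0 dn0 Hs10).
have aless : `|a| < `|a0| * del ^+ n / (3 * (Hs + 1)).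
  by apply: lt_le_trans adel _; exact: hm_ler ltr01 (divr_gt0 dn0 Hs10).
have HHs : `|a| * Hs * 3 < `|a0| * del ^+ n.
  apply: le_lt_trans (_ : `|a| * (3 * (Hs + 1)) < _).
    rewrite -mulrA ler_wpM2l // mulrC ler_pM2l ?ltr0n //.
    by rewrite lerDl.
  by rewrite -ltr_pdivlMr.
rewrite -mxi mup_gx //.
have [k Hk] : exists k, A k = a ^ q * xi.
  move: rxi; rewrite /root gx_horner mulf_eq0 mulf_eq0 (negbTE a0n) /=.
  rewrite expfz_eq0 (negbTE an) andbF /= => /prodf_eq0 [k _].
  by rewrite subr_eq0 => /eqP ->; exists k.
have al0 : a ^ q * xi != 0 by rewrite mulf_neq0 ?expfz_neq0.
have nal : `|a ^ q * xi| + 1 <= Amax by rewrite -Hk.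
apply: (@core C q m n a0 A h a xi eps d beta r1 del Rb K) => //.
- move=> j Hj; rewrite dsep -Hk; apply: sepij; by rewrite Hk.
- by rewrite /Rb lerD2r (le_trans _ nal) // lerDl.
- apply: lt_le_trans (_ : d / Amax * `|a ^ q * xi| <= _).
    by rewrite ltr_pM2r ?normr_gt0.
  rewrite mulrAC ler_pdivrMr // ler_wpM2l ?ltW //.
  by apply: (lt_le_trans _ nal); rewrite ltrDl ltr01.
- exact: ltW.
- apply: (le_trans (hm_lel _ _ ea0 br0)); apply: ler_wpM2l; first exact: ltW.
  by rewrite -Hk; apply: amini; rewrite Hk.
- exact: ltW.
- by rewrite /K; apply: leqnSn.
Qed.
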